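(* Let $\varphi$ be a hexagonal grid whose reference triangle $T=(A,B,C)$ is nondegenerate and counterclockwise. Then every triangle of the grid that is nondegenerate and counterclockwise (as listed in the grid) has second isodynamic point equal to $X_{16}(T)$.
   Context: Let $\zeta=e^{i\pi/3}$ and $\Lambda=\{m+n\zeta: m,n\in\mathbb{Z}\}$. Call $p,q\in\Lambda$ adjacent if $|p-q|=1$, and let $\mathcal{E}$ be the set of unordered pairs $\{p,q\}$ of adjacent lattice points. A hexagonal grid is a map $\varphi:\mathcal{E}\to\mathbb{C}$ such that for every $p\in\Lambda$ there exist $c_p,r_p\in\mathbb{C}$ with $\varphi(\{p,p+\zeta^k\})=c_p+r_p\zeta^k$ for $k=0,\dots,5$. Thus the six points form a regular, possibly degenerate, hexagon $H_p$ listed counterclockwise. For each set $\{p,q,s\}\subset\Lambda$ of three pairwise adjacent lattice points listed counterclockwise, the corresponding triangle of the grid is $(\varphi(\{p,q\}),\varphi(\{q,s\}),\varphi(\{s,p\}))$. The reference triangle of $\varphi$ is $(\varphi(\{0,1\}),\varphi(\{1,\zeta\}),\varphi(\{\zeta,0\}))$. For a nondegenerate triangle with vertices $V_1,V_2,V_3$, let $\ell_i$ be the length of the side opposite $V_i$ and $\theta_i$ the angle at $V_i$. Its second isodynamic point $X_{16}$ has homogeneous barycentric coordinates $(\ell_1\sin(\theta_1-\pi/3):\ell_2\sin(\theta_2-\pi/3):\ell_3\sin(\theta_3-\pi/3))$. *)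

(* Defs.v *)
From Stdlib Require Import Reals ZArith.
From Coquelicot Require Import Coquelicot.

Open Scope C_scope.

Definition zeta : C := (cos (PI / 3), sin (PI / 3))%R.

Definition in_lattice (z : C) : Prop :=
  exists m n : Z, z = RtoC (IZR m) + RtoC (IZR n) * zeta.

Definition adjacent (p q : C) : Prop := Cmod (p - q) = 1%R.

(* A map on unordered pairs of adjacent lattice points is modelled as a
   function phi : C -> C -> C that is symmetric on adjacent lattice pairs
   (its values elsewhere are irrelevant). *)
Definition hexagonal_grid (phi : C -> C -> C) : Prop :=
  (forall p q, in_lattice p -> in_lattice q -> adjacent p q -> phi p q = phi q p) /\
  (forall p, in_lattice p ->
     exists c r : C, forall k : nat, (k < 6)%nat ->
       phi p (p + zeta ^ k) = c + r * zeta ^ k).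

(* signed area (times 2) of (A,B,C): positive iff counterclockwise *)
Definition orient (A B D : C) : R := Im (Cconj (B - A) * (D - A)).
Definition nondegenerate (A B D : C) : Prop := orient A B D <> 0%R.
Definition ccw (A B D : C) : Prop := (0 < orient A B D)%R.

Definition angle_at (V1 V2 V3 : C) : R :=
  acos (Re ((V2 - V1) * Cconj (V3 - V1)) / (Cmod (V2 - V1) * Cmod (V3 - V1))).

Definition x16_weight (V1 V2 V3 : C) : R :=
  (Cmod (V2 - V3) * sin (angle_at V1 V2 V3 - PI / 3))%R.

(* P is the (finite) point with homogeneous barycentric coordinates
   (w1 : w2 : w3) of X_16 w.r.t. (V1,V2,V3). *)
Definition is_X16 (V1 V2 V3 P : C) : Prop :=
  let w1 := x16_weight V1 V2 V3 in
  let w2 := x16_weight V2 V3 V1 in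
  let w3 := x16_weight V3 V1 V2 in
  (w1 + w2 + w3)%R <> 0%R /\
  RtoC (w1 + w2 + w3) * P = RtoC w1 * V1 + RtoC w2 * V2 + RtoC w3 * V3.

(* Main.v *)
Require Import Defs.
From Stdlib Require Import Reals ZArith Lra Lia Psatz Classical_Prop.
From Coquelicot Require Import Coquelicot.
Open Scope C_scope.

Lemma Cmod_sq (z : C) : (Cmod z * Cmod z = fst z * fst z + snd z * snd z)%R.
Proof.
  unfold Cmod. rewrite sqrt_sqrt. ring. nra.
Qed.

Lemma Cmod_pos_sq (z : C) : (0 < fst z * fst z + snd z * snd z)%R -> (0 < Cmod z)%R.
Proof.
  intros H. unfold Cmod. apply sqrt_lt_R0. nra.
Qed.

Lemma weight_eq (V1 V2 V3 : C) : (0 < orient V1 V2 V3)%R ->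
  x16_weight V1 V2 V3 =
  (Cmod (V2 - V3) * (orient V1 V2 V3 - sqrt 3 * Re ((V2 - V1) * Cconj (V3 - V1))) /
   (2 * Cmod (V2 - V1) * Cmod (V3 - V1)))%R.
Proof.
  intros Ho.
  unfold x16_weight, angle_at.
  set (S := orient V1 V2 V3) in *.
  set (D := Re ((V2 - V1) * Cconj (V3 - V1))).
  set (l3 := Cmod (V2 - V1)). set (l2 := Cmod (V3 - V1)).
  assert (HL : (D * D + S * S = (l3 * l3) * (l2 * l2))%R).
  { unfold D, S, l3, l2, orient. rewrite !Cmod_sq.
    destruct V1 as [a1 a2], V2 as [b1 b2], V3 as [c1 c2]. simpl. ring. }
  assert (Hl3 : (0 < l3)%R).
  { unfold l3. apply Cmod_pos_sq. unfold S, orient in Ho.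
    destruct V1 as [a1 a2], V2 as [b1 b2], V3 as [c1 c2]. simpl in *.
    destruct (Req_dec (b1 - a1) 0); destruct (Req_dec (b2 - a2) 0); nra. }
  assert (Hl2 : (0 < l2)%R).
  { unfold l2. apply Cmod_pos_sq. unfold S, orient in Ho.
    destruct V1 as [a1 a2], V2 as [b1 b2], V3 as [c1 c2]. simpl in *.
    destruct (Req_dec (c1 - a1) 0); destruct (Req_dec (c2 - a2) 0); nra. }
  set (t := (D / (l3 * l2))%R).
  assert (H1t : (1 - t² = Rsqr (S / (l3 * l2)))%R).
  { unfold t, Rsqr. assert (Hn : (l3 * l2 <> 0)%R) by nra.
    apply Rmult_eq_reg_r with ((l3 * l2) * (l3 * l2))%R; [| nra].
    field_simplify. all: try exact Hn. all: try nra. }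

  assert (Hb : (-1 <= t <= 1)%R).
  { assert (0 <= Rsqr (S / (l3 * l2)))%R by apply Rle_0_sqr.
    unfold Rsqr in *. nra. }
  rewrite sin_minus, cos_acos by exact Hb. rewrite sin_acos by exact Hb.
  rewrite H1t, sqrt_Rsqr.
  2:{ apply Rlt_le. apply Rdiv_lt_0_compat; nra. }
  rewrite cos_PI3, sin_PI3. unfold t. field. lra.
Qed.

Definition Nf (V1 V2 V3 : C) : R :=
  ((fst (V2 - V3)%C * fst (V2 - V3)%C + snd (V2 - V3)%C * snd (V2 - V3)%C) *
   (orient V1 V2 V3 - sqrt 3 * Re ((V2 - V1) * Cconj (V3 - V1))%C))%R.

Lemma Nf_scale K b Y1 Y2 Y3 :
  Nf (K + b * Y1) (K + b * Y2) (K + b * Y3) =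
  ((fst b * fst b + snd b * snd b) * (fst b * fst b + snd b * snd b) * Nf Y1 Y2 Y3)%R.
Proof.
  unfold Nf, orient. destruct K, b, Y1, Y2, Y3. simpl. ring.
Qed.

Lemma orient_scale K b Y1 Y2 Y3 :
  orient (K + b * Y1) (K + b * Y2) (K + b * Y3) =
  ((fst b * fst b + snd b * snd b) * orient Y1 Y2 Y3)%R.
Proof.
  unfold orient. destruct K, b, Y1, Y2, Y3. simpl. ring.
Qed.

Lemma sqrt3_sq : (sqrt 3 * sqrt 3 = 3)%R.
Proof. apply sqrt_sqrt. lra. Qed.

Lemma zeta_eq : zeta = (1/2, sqrt 3 / 2)%R.
Proof. unfold zeta. rewrite cos_PI3, sin_PI3. reflexivity. Qed.

Section Y.
Variables u t : C.
Let v := u + t.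
Let w := u + zeta * t.
Let Y1 := u * v.
Let Y2 := v * w.
Let Y3 := w * u.

Lemma orient_Y : orient Y1 Y2 Y3 =
  ((fst t * fst t + snd t * snd t) * - Im (Cconj (zeta * zeta) * Cconj v * u))%R.
Proof.
  unfold Y1, Y2, Y3, v, w, orient. rewrite zeta_eq. pose proof sqrt3_sq as Hs.
  destruct u, t. simpl. generalize dependent (sqrt 3). intros s Hs. field [Hs].
Qed.

Lemma sumN_Y : (Nf Y1 Y2 Y3 + Nf Y2 Y3 Y1 + Nf Y3 Y1 Y2 =
  2 * (fst t * fst t + snd t * snd t) * (fst t * fst t + snd t * snd t) * orient Y1 Y2 Y3)%R.
Proof.
  unfold Nf, Y1, Y2, Y3, v, w, orient. rewrite zeta_eq. pose proof sqrt3_sq as Hs.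
  destruct u, t. simpl. generalize dependent (sqrt 3). intros s Hs. field [Hs].
Qed.

Lemma wsum_Y : RtoC (Nf Y1 Y2 Y3) * Y1 + RtoC (Nf Y2 Y3 Y1) * Y2 + RtoC (Nf Y3 Y1 Y2) * Y3 = 0.
Proof.
  unfold Nf, Y1, Y2, Y3, v, w, orient. rewrite zeta_eq. pose proof sqrt3_sq as Hs.
  destruct u, t. unfold RtoC. simpl. generalize dependent (sqrt 3). intros s Hs. apply injective_projections; simpl; field [Hs].
Qed.
End Y.
Lemma orient_cyc V1 V2 V3 : orient V2 V3 V1 = orient V1 V2 V3.
Proof. unfold orient. destruct V1, V2, V3. simpl. ring. Qed.

Lemma Cmod_sym x y : Cmod (x - y) = Cmod (y - x).
Proof. replace (x - y) with (- (y - x)) by ring. apply Cmod_opp. Qed.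

Lemma orient_Cmod V1 V2 V3 : (0 < orient V1 V2 V3)%R -> (0 < Cmod (V2 - V1))%R.
Proof.
  intros Ho. apply Cmod_pos_sq. unfold orient in Ho.
  destruct V1 as [a1 a2], V2 as [b1 b2], V3 as [c1 c2]. simpl in *.
  destruct (Req_dec (b1 - a1) 0); destruct (Req_dec (b2 - a2) 0); nra.
Qed.

Lemma Nf_Cmod V1 V2 V3 : Nf V1 V2 V3 =
  (Cmod (V2 - V3) * Cmod (V2 - V3) *
   (orient V1 V2 V3 - sqrt 3 * Re ((V2 - V1) * Cconj (V3 - V1))%C))%R.
Proof. unfold Nf. rewrite Cmod_sq. reflexivity. Qed.

Lemma weights_Nf V1 V2 V3 : (0 < orient V1 V2 V3)%R ->
  let M := (2 * Cmod (V2 - V3) * Cmod (V3 - V1) * Cmod (V1 - V2))%R in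
  (0 < M)%R /\
  x16_weight V1 V2 V3 = (Nf V1 V2 V3 / M)%R /\
  x16_weight V2 V3 V1 = (Nf V2 V3 V1 / M)%R /\
  x16_weight V3 V1 V2 = (Nf V3 V1 V2 / M)%R.
Proof.
  intros Ho M.
  assert (Ho2 : (0 < orient V2 V3 V1)%R) by (rewrite orient_cyc; exact Ho).
  assert (Ho3 : (0 < orient V3 V1 V2)%R) by (rewrite orient_cyc; exact Ho2).
  pose proof (orient_Cmod _ _ _ Ho) as H1.
  pose proof (orient_Cmod _ _ _ Ho2) as H2.
  pose proof (orient_Cmod _ _ _ Ho3) as H3.
  rewrite !Nf_Cmod, !weight_eq by assumption.
  rewrite (orient_cyc V2 V3 V1), (orient_cyc V1 V2 V3).
  unfold M.
  rewrite (Cmod_sym V2 V1) in *. rewrite (Cmod_sym V3 V2) in *. rewrite (Cmod_sym V1 V3) in *.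
  split; [repeat apply Rmult_lt_0_compat; lra|].
  split; [|split]; field; split; try split; apply Rgt_not_eq; lra.
Qed.

Lemma is_X16_iff V1 V2 V3 P : (0 < orient V1 V2 V3)%R ->
  (is_X16 V1 V2 V3 P <->
   ((Nf V1 V2 V3 + Nf V2 V3 V1 + Nf V3 V1 V2)%R <> 0%R /\
    RtoC (Nf V1 V2 V3 + Nf V2 V3 V1 + Nf V3 V1 V2) * P =
    RtoC (Nf V1 V2 V3) * V1 + RtoC (Nf V2 V3 V1) * V2 + RtoC (Nf V3 V1 V2) * V3)).
Proof.
  intros Ho. destruct (weights_Nf V1 V2 V3 Ho) as [HM [E1 [E2 E3]]].
  set (M := (2 * Cmod (V2 - V3) * Cmod (V3 - V1) * Cmod (V1 - V2))%R) in *.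
  unfold is_X16. rewrite E1, E2, E3.
  set (n1 := Nf V1 V2 V3). set (n2 := Nf V2 V3 V1). set (n3 := Nf V3 V1 V2).
  assert (HMi : (/ M <> 0)%R) by (apply Rinv_neq_0_compat; lra).
  assert (Hk : forall x y : C, RtoC (/M) * x = RtoC (/M) * y -> x = y).
  { intros x y H. apply (f_equal (fun z => RtoC M * z)) in H.
    rewrite !Cmult_assoc, <- RtoC_mult, Rinv_r in H by lra. rewrite !Cmult_1_l in H. exact H. }
  unfold Rdiv. rewrite !RtoC_plus, !RtoC_mult.
  split; intros [Hs He]; split.
  - intro Hc. apply Hs. rewrite <- !Rmult_plus_distr_r, Hc. ring.
  - apply Hk.
    transitivity ((RtoC n1 * RtoC (/M) + RtoC n2 * RtoC (/M) + RtoC n3 * RtoC(/M)) * P). ring.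
    rewrite He. ring.
  - intro Hc. apply Hs. rewrite <- !Rmult_plus_distr_r in Hc.
    apply Rmult_integral in Hc. destruct Hc; [assumption| contradiction].
  -
    transitivity (RtoC (/M) * ((RtoC n1 + RtoC n2 + RtoC n3) * P)). ring.
    rewrite He. ring.
Qed.

Definition G (c0 al be x y : C) : C := c0 + al * (x + y) + be * x * y.

Lemma tri_X16 (c0 al be p a : C) : be <> 0 ->
  (0 < orient (G c0 al be p (p + a)) (G c0 al be (p + a) (p + zeta * a))
              (G c0 al be (p + zeta * a) p))%R ->
  is_X16 (G c0 al be p (p + a)) (G c0 al be (p + a) (p + zeta * a))
         (G c0 al be (p + zeta * a) p) (c0 - al * al / be).
Proof.
  intros Hbe Ho.
  set (K := c0 - al*al/be). set (u := al + be*p). set (t := be*a). set (b := / be).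
  assert (E1 : G c0 al be p (p+a) = K + b * (u * (u+t))) by (unfold G, K, u, t, b; field; exact Hbe).
  assert (E2 : G c0 al be (p+a) (p+zeta*a) = K + b * ((u+t) * (u+zeta*t)))
    by (unfold G, K, u, t, b; field; exact Hbe).
  assert (E3 : G c0 al be (p+zeta*a) p = K + b * ((u+zeta*t) * u))
    by (unfold G, K, u, t, b; field; exact Hbe).
  rewrite E1, E2, E3 in *.
  apply is_X16_iff; [exact Ho|].
  rewrite !Nf_scale.
  rewrite orient_scale in Ho. rewrite orient_Y in Ho.
  pose proof (sumN_Y u t) as HS. pose proof (wsum_Y u t) as HW. pose proof (orient_Y u t) as HO.
  rewrite HO in HS.
  set (B2 := (fst b * fst b + snd b * snd b)%R) in *.
  set (T2 := (fst t * fst t + snd t * snd t)%R) in *.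
  set (R0 := (- Im (Cconj (zeta * zeta) * Cconj (u + t) * u))%R) in *.
  set (N1 := Nf (u * (u + t)) ((u + t) * (u + zeta * t)) ((u + zeta * t) * u)) in *.
  set (N2 := Nf ((u + t) * (u + zeta * t)) ((u + zeta * t) * u) (u * (u + t))) in *.
  set (N3 := Nf ((u + zeta * t) * u) (u * (u + t)) ((u + t) * (u + zeta * t))) in *.
  assert (HB : (0 <= B2)%R) by (unfold B2; nra).
  assert (HT : (0 <= T2)%R) by (unfold T2; nra).
  split.
  - replace (B2 * B2 * N1 + B2 * B2 * N2 + B2 * B2 * N3)%R with (B2 * B2 * (N1 + N2 + N3))%R by ring.
    rewrite HS.
    assert (B2 <> 0)%R by (intro Hc; rewrite Hc in Ho; lra).
    assert (T2 <> 0)%R by (intro Hc; rewrite Hc in Ho; lra).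
    assert (0 < T2 * R0)%R by nra.
    intro Hc. assert (0 < B2 * B2 * (2 * T2 * T2 * (T2 * R0)))%R; [|lra].
    apply Rmult_lt_0_compat; [nra|]. apply Rmult_lt_0_compat; [nra|]. lra.
  - rewrite !RtoC_plus, !RtoC_mult.
    transitivity (RtoC (B2 * B2) * ((RtoC N1 + RtoC N2 + RtoC N3) * K) +
                  RtoC (B2 * B2) * b * (RtoC N1 * (u * (u + t)) + RtoC N2 * ((u + t) * (u + zeta * t))
                    + RtoC N3 * ((u + zeta * t) * u))).
    + rewrite HW. rewrite !RtoC_mult. ring.
    + rewrite !RtoC_mult. ring.
Qed.

Lemma zeta_sq : zeta * zeta = zeta - 1.
Proof.
  rewrite zeta_eq. pose proof sqrt3_sq as Hs. generalize dependent (sqrt 3). intros s Hs.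
  apply injective_projections; simpl; field [Hs].
Qed.

Lemma zeta_pows : zeta ^ 0 = 1 /\ zeta ^ 1 = zeta /\ zeta ^ 2 = zeta - 1 /\
  zeta ^ 3 = - (1) /\ zeta ^ 4 = - zeta /\ zeta ^ 5 = 1 - zeta.
Proof.
  pose proof zeta_sq as H. simpl.
  assert (H2 : zeta * (zeta * 1) = zeta - 1) by (rewrite Cmult_1_r; exact H).
  assert (H3 : zeta * (zeta * (zeta * 1)) = - (1)).
  { rewrite H2. replace (zeta * (zeta - 1)) with (zeta * zeta - zeta) by ring. rewrite H. ring. }
  assert (H4 : zeta * (zeta * (zeta * (zeta * 1))) = - zeta).
  { rewrite H3. ring. }
  assert (H5 : zeta * (zeta * (zeta * (zeta * (zeta * 1)))) = 1 - zeta).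
  { rewrite H4. replace (zeta * - zeta) with (- (zeta * zeta)) by ring. rewrite H. ring. }
  repeat split; try assumption; ring.
Qed.

Definition unit (u : C) : Prop :=
  u = 1 \/ u = zeta \/ u = zeta - 1 \/ u = - (1) \/ u = - zeta \/ u = 1 - zeta.

Lemma unit_pow u : unit u -> exists k, (k < 6)%nat /\ zeta ^ k = u.
Proof.
  destruct zeta_pows as [P0 [P1 [P2 [P3 [P4 P5]]]]].
  intros [H|[H|[H|[H|[H|H]]]]]; subst u.
  - exists 0%nat; split; [lia|exact P0].
  - exists 1%nat; split; [lia|exact P1].
  - exists 2%nat; split; [lia|exact P2].
  - exists 3%nat; split; [lia|exact P3].
  - exists 4%nat; split; [lia|exact P4].
  - exists 5%nat; split; [lia|exact P5].
Qed.

Lemma unit_opp u : unit u -> unit (- u).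
Proof.
  unfold unit. intros [H|[H|[H|[H|[H|H]]]]]; subst u.
  - right; right; right; left; reflexivity.
  - right; right; right; right; left; reflexivity.
  - right; right; right; right; right; ring.
  - left; ring.
  - right; left; ring.
  - right; right; left; ring.
Qed.

Lemma unit_rot u : unit u -> unit (zeta * u).
Proof.
  pose proof zeta_sq as Z.
  unfold unit. intros [H|[H|[H|[H|[H|H]]]]]; subst u.
  - right; left; ring.
  - right; right; left; exact Z.
  - right; right; right; left. replace (zeta * (zeta - 1)) with (zeta * zeta - zeta) by ring.
    rewrite Z; ring.
  - right; right; right; right; left; ring.
  - right; right; right; right; right. replace (zeta * - zeta) with (- (zeta * zeta)) by ring.
    rewrite Z; ring.
  - left. replace (zeta * (1 - zeta)) with (zeta - zeta * zeta) by ring. rewrite Z; ring.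
Qed.

Lemma unit_Cmod u : unit u -> Cmod u = 1%R.
Proof.
  intros H. unfold Cmod. rewrite <- sqrt_1. f_equal.
  unfold unit in H. rewrite zeta_eq in H. pose proof sqrt3_sq as Hs. generalize dependent (sqrt 3). intros s H Hs.
  destruct H as [H|[H|[H|[H|[H|H]]]]]; subst u; simpl; field [Hs].
Qed.

Lemma unit_neq0 u : unit u -> u <> 0.
Proof.
  intros H Hc. apply unit_Cmod in H. rewrite Hc, Cmod_0 in H. lra.
Qed.

Definition L (m n : Z) : C := RtoC (IZR m) + RtoC (IZR n) * zeta.

Lemma L_add m n i j : L m n + L i j = L (m + i) (n + j).
Proof. unfold L. rewrite !plus_IZR, !RtoC_plus. ring. Qed.

Lemma L_rot i j : zeta * L i j = L (- j) (i + j).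
Proof.
  unfold L. rewrite opp_IZR, plus_IZR, RtoC_plus, RtoC_opp.
  replace (zeta * (RtoC (IZR i) + RtoC (IZR j) * zeta)) with
    (RtoC (IZR i) * zeta + RtoC (IZR j) * (zeta * zeta)) by ring.
  rewrite zeta_sq. ring.
Qed.

Definition unitZ (i j : Z) : Prop :=
  ((i = 1 /\ j = 0) \/ (i = 0 /\ j = 1) \/ (i = -1 /\ j = 1) \/
  (i = -1 /\ j = 0) \/ (i = 0 /\ j = -1) \/ (i = 1 /\ j = -1))%Z.

Lemma unitZ_unit i j : unitZ i j -> unit (L i j).
Proof.
  unfold unitZ, unit, L.
  intros [[-> ->]|[[-> ->]|[[-> ->]|[[-> ->]|[[-> ->]|[-> ->]]]]]].
  - left. apply injective_projections; simpl; ring.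
  - right; left. apply injective_projections; simpl; ring.
  - right; right; left. apply injective_projections; simpl; ring.
  - right; right; right; left. apply injective_projections; simpl; ring.
  - right; right; right; right; left. apply injective_projections; simpl; ring.
  - right; right; right; right; right. apply injective_projections; simpl; ring.
Qed.

Lemma lattice_L x : in_lattice x -> exists m n, x = L m n.
Proof. intros [m [n H]]. exists m, n. exact H. Qed.

Lemma L_lattice m n : in_lattice (L m n).
Proof. exists m, n. reflexivity. Qed.

Lemma unit_unitZ u : unit u -> exists i j, unitZ i j /\ u = L i j.
Proof.
  unfold unit, unitZ, L.
  intros [H|[H|[H|[H|[H|H]]]]]; subst u.
  - exists 1%Z, 0%Z. split; [tauto|]. apply injective_projections; simpl; ring.
  - exists 0%Z, 1%Z. split; [tauto|]. apply injective_projections; simpl; ring.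
  - exists (-1)%Z, 1%Z. split; [tauto|]. apply injective_projections; simpl; ring.
  - exists (-1)%Z, 0%Z. split; [tauto|]. apply injective_projections; simpl; ring.
  - exists 0%Z, (-1)%Z. split; [tauto|]. apply injective_projections; simpl; ring.
  - exists 1%Z, (-1)%Z. split; [tauto|]. apply injective_projections; simpl; ring.
Qed.

Lemma lattice_add_unit x u : in_lattice x -> unit u -> in_lattice (x + u).
Proof.
  intros Hx Hu. destruct (lattice_L x Hx) as [m [n ->]].
  destruct (unit_unitZ u Hu) as [i [j [_ ->]]]. rewrite L_add. apply L_lattice.
Qed.

Section Grid.
Variable phi : C -> C -> C.
Hypothesis Hphi : hexagonal_grid phi.

Definition cc (x : C) : C := (phi x (x + 1) + phi x (x + - (1))) / 2.
Definition rr (x : C) : C := (phi x (x + 1) - phi x (x + - (1))) / 2.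

Lemma two_neq0 : (2 : C) <> 0.
Proof. intro H. apply (f_equal fst) in H. simpl in H. lra. Qed.

Lemma grid_val x u : in_lattice x -> unit u -> phi x (x + u) = cc x + rr x * u.
Proof.
  intros Hx Hu. destruct Hphi as [_ Hh]. destruct (Hh x Hx) as [c [r Hcr]].
  destruct zeta_pows as [P0 [_ [_ [P3 _]]]].
  assert (H0 := Hcr 0%nat ltac:(lia)). assert (H3 := Hcr 3%nat ltac:(lia)).
  rewrite P0 in H0. rewrite P3 in H3.
  assert (Ec : cc x = c). { unfold cc. rewrite H0, H3. field; exact two_neq0. }
  assert (Er : rr x = r). { unfold rr. rewrite H0, H3. field; exact two_neq0. }
  destruct (unit_pow u Hu) as [k [Hk Hku]]. rewrite <- Hku, Ec, Er. apply Hcr. exact Hk.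
Qed.

Lemma grid_rel x u : in_lattice x -> unit u ->
  cc (x + u) - cc x = (rr x + rr (x + u)) * u.
Proof.
  intros Hx Hu.
  assert (Hy : in_lattice (x + u)) by (apply lattice_add_unit; assumption).
  assert (E1 := grid_val x u Hx Hu).
  assert (E2 := grid_val (x + u) (- u) Hy (unit_opp u Hu)).
  replace (x + u + - u) with x in E2 by ring.
  destruct Hphi as [Hs _].
  rewrite Hs in E1; try assumption.
  - rewrite E1 in E2. 
    replace (cc (x + u) - cc x) with ((cc (x + u) + rr (x + u) * - u) - (cc x + rr x * u) +
      (rr x + rr (x + u)) * u) by ring.
    rewrite <- E2. ring.
  - unfold adjacent. replace (x - (x + u)) with (- u) by ring. rewrite Cmod_opp.
    apply unit_Cmod; exact Hu.
Qed.

Definition c0 := cc 0.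
Definition al := rr 0.
Definition be := rr 1 - rr 0.
Definition Ec (x : C) : C := cc x - (c0 + 2 * al * x + be * x * x).
Definition Er (x : C) : C := rr x - (al + be * x).

Lemma E_rel x u : in_lattice x -> unit u ->
  Ec (x + u) - Ec x = (Er x + Er (x + u)) * u.
Proof.
  intros Hx Hu. unfold Ec, Er.
  replace (cc (x + u) - (c0 + 2 * al * (x + u) + be * (x + u) * (x + u)) -
     (cc x - (c0 + 2 * al * x + be * x * x)))
   with ((cc (x + u) - cc x) - (2 * al * u + be * (2 * x + u) * u)) by ring.
  rewrite grid_rel by assumption. ring.
Qed.

Lemma E_tri x u : in_lattice x -> unit u -> Ec x = 0 -> Er x = 0 ->
  Ec (x + u) = 0 -> Er (x + u) = 0 -> Ec (x + zeta * u) = 0 /\ Er (x + zeta * u) = 0.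
Proof.
  intros Hx Hu H1 H2 H3 H4.
  assert (R1 := E_rel x (zeta * u) Hx (unit_rot u Hu)).
  assert (Hu2 : unit ((zeta - 1) * u)).
  { replace ((zeta - 1) * u) with (zeta * (zeta * u)).
    - apply unit_rot, unit_rot, Hu.
    - replace (zeta * (zeta * u)) with ((zeta * zeta) * u) by ring. rewrite zeta_sq. reflexivity. }
  assert (R2 := E_rel (x + u) ((zeta - 1) * u) (lattice_add_unit x u Hx Hu) Hu2).
  replace (x + u + (zeta - 1) * u) with (x + zeta * u) in R2 by ring.
  rewrite H1, H2 in R1. rewrite H3, H4 in R2.
  assert (Hz : Er (x + zeta * u) * u = 0).
  { replace (Er (x + zeta * u) * u) with
      ((0 + Er (x + zeta * u)) * (zeta * u) - (0 + Er (x + zeta * u)) * ((zeta - 1) * u)) by ring.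
    rewrite <- R1, <- R2. ring. }
  assert (Hr : Er (x + zeta * u) = 0).
  { apply (f_equal (fun z => z * / u)) in Hz.
    replace (Er (x + zeta * u) * u * / u) with (Er (x + zeta * u)) in Hz.
    - rewrite Hz. ring.
    - field. apply unit_neq0, Hu. }
  split; [|exact Hr].
  rewrite Hr in R1. replace (Ec (x + zeta * u)) with (Ec (x + zeta * u) - 0) by ring.
  rewrite R1. ring.
Qed.

Definition Zp (m n : Z) : Prop := Ec (L m n) = 0 /\ Er (L m n) = 0.

Lemma Tz m n i j m1 n1 m2 n2 : unitZ i j -> m1 = (m + i)%Z -> n1 = (n + j)%Z ->
  m2 = (m - j)%Z -> n2 = (n + i + j)%Z -> Zp m n -> Zp m1 n1 -> Zp m2 n2.
Proof.
  intros Hu -> -> -> -> [H1 H2] [H3 H4].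
  assert (Hu' := unitZ_unit i j Hu).
  rewrite <- L_add in H3, H4.
  destruct (E_tri (L m n) (L i j) (L_lattice m n) Hu' H1 H2 H3 H4) as [A B].
  rewrite L_rot, L_add in A, B.
  replace (m + - j)%Z with (m - j)%Z in A, B by lia.
  replace (n + (i + j))%Z with (n + i + j)%Z in A, B by lia.
  split; assumption.
Qed.

Lemma L00 : L 0 0 = 0.
Proof. unfold L. apply injective_projections; simpl; ring. Qed.
Lemma L10 : L 1 0 = 1.
Proof. unfold L. apply injective_projections; simpl; ring. Qed.

Lemma Zp00 : Zp 0 0.
Proof. unfold Zp, Ec, Er, c0, al, be. rewrite L00. split; ring. Qed.

Lemma lat0 : in_lattice 0.
Proof. rewrite <- L00. apply L_lattice. Qed.

Lemma Zp10 : Zp 1 0.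
Proof.
  unfold Zp. rewrite L10. split.
  - assert (H := grid_rel 0 1 lat0 ltac:(left; reflexivity)).
    replace (0 + 1) with (RtoC 1) in H by ring.
    unfold Ec, c0, al, be. 
    replace (cc 1 - (cc 0 + 2 * rr 0 * 1 + (rr 1 - rr 0) * 1 * 1)) with
      (cc 1 - cc 0 - (rr 0 + rr 1) * 1) by ring.
    rewrite H. ring.
  - unfold Er, al, be. ring.
Qed.

Lemma row0 : forall m, Zp m 0 /\ Zp (m + 1) 0.
Proof.
  intro m. induction m using Z.peano_ind.
  - split; [exact Zp00| exact Zp10].
  - destruct IHm as [A B]. split; [exact B|].
    assert (C1 : Zp m 1) by (apply (Tz m 0 1 0 (m+1) 0); unfold unitZ; try lia; assumption).
    assert (C2 : Zp (m+1) 1) by (apply (Tz m 1 1 (-1) (m+1) 0); unfold unitZ; try lia; assumption).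
    apply (Tz (m+1) 1 0 (-1) (m+1) 0); unfold unitZ; try lia; assumption.
  - destruct IHm as [A B]. split.
    + assert (C1 : Zp m 1) by (apply (Tz m 0 1 0 (m+1) 0); unfold unitZ; try lia; assumption).
      assert (C2 : Zp (m-1) 1) by (apply (Tz m 0 0 1 m 1); unfold unitZ; try lia; assumption).
      apply (Tz m 0 (-1) 1 (m-1) 1); unfold unitZ; try lia; assumption.
    + replace (Z.pred m + 1)%Z with m by lia. exact A.
Qed.

Lemma all_Zp : forall n m, Zp m n.
Proof.
  intro n. induction n using Z.peano_ind.
  - intro m. apply row0.
  - intro m. apply (Tz m n 1 0 (m+1) n); unfold unitZ; try lia; apply IHn.
  - intro m. apply (Tz m n (-1) 0 (m-1) n); unfold unitZ; try lia; apply IHn.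
Qed.

Lemma E_zero x : in_lattice x -> Ec x = 0 /\ Er x = 0.
Proof. intros [m [n ->]]. apply (all_Zp n m). Qed.

End Grid.

Lemma int_unit i j : (i * i + i * j + j * j = 1)%Z -> unitZ i j.
Proof.
  intro H.
  assert (Hj : (-1 <= j <= 1)%Z) by nia.
  assert (Hi : (-1 <= i <= 1)%Z) by nia.
  assert (Di : (i = -1 \/ i = 0 \/ i = 1)%Z) by lia.
  assert (Dj : (j = -1 \/ j = 0 \/ j = 1)%Z) by lia.
  unfold unitZ.
  destruct Di as [ -> | [ -> | -> ]]; destruct Dj as [ -> | [ -> | -> ]]; simpl in H; lia.
Qed.

Lemma L_sub m n m' n' : L m' n' - L m n = L (m' - m) (n' - n).
Proof. unfold L. rewrite !minus_IZR. apply injective_projections; simpl; ring. Qed.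

Lemma adj_unit x y : in_lattice x -> in_lattice y -> Cmod (x - y) = 1%R -> unit (y - x).
Proof.
  intros [m [n Hx]] [m' [n' Hy]] Hc.
  change (x = L m n) in Hx. change (y = L m' n') in Hy. subst x y.
  rewrite Cmod_sym, L_sub in Hc. rewrite L_sub.
  apply unitZ_unit. apply int_unit.
  apply eq_IZR. rewrite !plus_IZR, !mult_IZR.
  assert (H2 := Cmod_sq (L (m' - m) (n' - n))). rewrite Hc in H2.
  unfold L in H2. rewrite zeta_eq in H2. simpl in H2.
  pose proof sqrt3_sq as Hs.
  generalize dependent (sqrt 3). intros s H2 Hs.
  set (i := IZR (m' - m)) in *. set (j := IZR (n' - n)) in *.
  simpl.
  transitivity ((i + (j * (1 / 2) - 0 * (s / 2))) * (i + (j * (1 / 2) - 0 * (s / 2))) +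
    (0 + (j * (s / 2) + 0 * (1 / 2))) * (0 + (j * (s / 2) + 0 * (1 / 2))))%R.
  { field [Hs]. }
  rewrite <- H2. ring.
Qed.

Lemma tri_shape p q s : Cmod (p - q) = 1%R -> Cmod (q - s) = 1%R -> Cmod (s - p) = 1%R ->
  (0 < orient p q s)%R -> s = p + zeta * (q - p).
Proof.
  intros H1 H2 H3 Ho.
  assert (E1 := Cmod_sq (p - q)). assert (E2 := Cmod_sq (q - s)). assert (E3 := Cmod_sq (s - p)).
  rewrite H1 in E1. rewrite H2 in E2. rewrite H3 in E3.
  unfold orient in Ho. rewrite zeta_eq.
  pose proof sqrt3_sq as Hs. assert (Hsp : (0 < sqrt 3)%R) by (apply sqrt_lt_R0; lra).
  generalize dependent (sqrt 3). intros r Hs Hsp.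
  destruct p as [p1 p2], q as [q1 q2], s as [s1 s2]. simpl in *.
  set (a1 := (q1 - p1)%R) in *. set (a2 := (q2 - p2)%R) in *.
  set (b1 := (s1 - p1)%R) in *. set (b2 := (s2 - p2)%R) in *.
  assert (Ha : (a1 * a1 + a2 * a2 = 1)%R) by (unfold a1, a2; nra).
  assert (Hb : (b1 * b1 + b2 * b2 = 1)%R) by (unfold b1, b2; nra).
  assert (Hd : (a1 * b1 + a2 * b2 = 1/2)%R) by (unfold a1, a2, b1, b2 in *; nra).
  assert (Hx : (a1 * b2 - a2 * b1 = r / 2)%R).
  { assert (Hx2 : ((a1 * b2 - a2 * b1) * (a1 * b2 - a2 * b1) = 3/4)%R).
    { replace ((a1 * b2 - a2 * b1) * (a1 * b2 - a2 * b1))%R with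
        ((a1 * a1 + a2 * a2) * (b1 * b1 + b2 * b2) - (a1 * b1 + a2 * b2) * (a1 * b1 + a2 * b2))%R
        by ring. rewrite Ha, Hb, Hd. field. }
    assert (Hpos : (0 < a1 * b2 - a2 * b1)%R).
    { unfold a1, a2, b1, b2. replace (s2 - p2 + - (q2 - p2) * 0)%R with (s2 - p2)%R in Ho by ring.
      nra. }
    nra. }
  assert (Hb1 : b1 = (a1 * (1/2) - a2 * (r/2))%R).
  { rewrite <- Hd, <- Hx. replace b1 with (b1 * (a1 * a1 + a2 * a2))%R at 1 by (rewrite Ha; ring). ring. }
  assert (Hb2 : b2 = (a2 * (1/2) + a1 * (r/2))%R).
  { rewrite <- Hd, <- Hx. replace b2 with (b2 * (a1 * a1 + a2 * a2))%R at 1 by (rewrite Ha; ring). ring. }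
  apply injective_projections; simpl.
  - unfold b1, a1, a2 in Hb1. lra.
  - unfold b2, a1, a2 in Hb2. lra.
Qed.

Lemma beta0_sum (c0 al p a : C) :
  let V1 := G c0 al 0 p (p + a) in let V2 := G c0 al 0 (p + a) (p + zeta * a) in
  let V3 := G c0 al 0 (p + zeta * a) p in
  (Nf V1 V2 V3 + Nf V2 V3 V1 + Nf V3 V1 V2 = 0)%R.
Proof.
  intros V1 V2 V3. unfold V1, V2, V3, Nf, G, orient. rewrite zeta_eq.
  pose proof sqrt3_sq as Hs. generalize dependent (sqrt 3). intros r Hs.
  destruct c0, al, p, a. simpl. field [Hs].
Qed.

Lemma X16_unique V1 V2 V3 P Q : is_X16 V1 V2 V3 P -> is_X16 V1 V2 V3 Q -> P = Q.
Proof.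
  unfold is_X16. intros [H1 E1] [_ E2]. rewrite <- E2 in E1.
  set (w := (x16_weight V1 V2 V3 + x16_weight V2 V3 V1 + x16_weight V3 V1 V2)%R) in *.
  apply (f_equal (fun z => RtoC (/ w) * z)) in E1.
  rewrite !Cmult_assoc, <- RtoC_mult, Rinv_l in E1 by exact H1.
  rewrite !Cmult_1_l in E1. exact E1.
Qed.

Lemma grid_G phi : hexagonal_grid phi -> forall x y, in_lattice x -> in_lattice y ->
  adjacent x y -> phi x y = G (c0 phi) (al phi) (be phi) x y.
Proof.
  intros Hg x y Hx Hy Ha.
  assert (Hu := adj_unit x y Hx Hy Ha).
  replace (phi x y) with (phi x (x + (y - x))) by (f_equal; ring).
  rewrite (grid_val phi Hg x (y - x) Hx Hu).
  destruct (E_zero phi Hg x Hx) as [A B]. unfold Ec, Er in A, B.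
  replace (cc phi x) with (cc phi x - (c0 phi + 2 * al phi * x + be phi * x * x) +
     (c0 phi + 2 * al phi * x + be phi * x * x)) by ring.
  replace (rr phi x) with (rr phi x - (al phi + be phi * x) + (al phi + be phi * x)) by ring.
  rewrite A, B. unfold G. ring.
Qed.

Theorem mainTheorem7 :
  forall phi : C -> C -> C,
    hexagonal_grid phi ->
    nondegenerate (phi 0 1) (phi 1 zeta) (phi zeta 0) ->
    ccw (phi 0 1) (phi 1 zeta) (phi zeta 0) ->
    forall P : C, is_X16 (phi 0 1) (phi 1 zeta) (phi zeta 0) P ->
    forall p q s : C,
      in_lattice p -> in_lattice q -> in_lattice s ->
      adjacent p q -> adjacent q s -> adjacent s p ->
      ccw p q s ->
      nondegenerate (phi p q) (phi q s) (phi s p) ->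
      ccw (phi p q) (phi q s) (phi s p) ->
      is_X16 (phi p q) (phi q s) (phi s p) P.
Proof.
  intros phi Hg _ Hccw P HP p q s Hp Hq Hs Hpq Hqs Hsp Hor _ Hccw2.
  set (c := c0 phi) in *. set (a0 := al phi) in *. set (b := be phi) in *.
  assert (L1 : in_lattice 1) by (rewrite <- L10; apply L_lattice).
  assert (Lz : in_lattice zeta).
  { exists 0%Z, 1%Z. apply injective_projections; simpl; ring. }
  assert (R1 : phi 0 1 = G c a0 b 0 (0 + 1)).
  { rewrite (grid_G phi Hg 0 1 lat0 L1).
    - f_equal. ring.
    - unfold adjacent. replace (0 - 1) with (- (1)) by ring. apply unit_Cmod. right; right; right; left; reflexivity. }
  assert (R2 : phi 1 zeta = G c a0 b (0 + 1) (0 + zeta * 1)).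
  { rewrite (grid_G phi Hg 1 zeta L1 Lz).
    - f_equal; ring.
    - unfold adjacent. apply unit_Cmod. right; right; right; right; right; reflexivity. }
  assert (R3 : phi zeta 0 = G c a0 b (0 + zeta * 1) 0).
  { rewrite (grid_G phi Hg zeta 0 Lz lat0).
    - f_equal; ring.
    - unfold adjacent. replace (zeta - 0) with zeta by ring. apply unit_Cmod. right; left; reflexivity. }
  rewrite R1, R2, R3 in HP, Hccw.
  unfold ccw in Hccw, Hccw2.
  destruct (Classical_Prop.classic (b = 0)) as [Hb | Hb].
  { exfalso. rewrite Hb in HP, Hccw.
    apply (is_X16_iff _ _ _ P Hccw) in HP. destruct HP as [HP _]. apply HP.
    apply beta0_sum. }
  assert (HK := tri_X16 c a0 b 0 1 Hb Hccw).
  assert (EP := X16_unique _ _ _ _ _ HP HK). rewrite EP.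
  assert (Hsh := tri_shape p q s Hpq Hqs Hsp Hor).
  assert (E1 : phi p q = G c a0 b p (p + (q - p))).
  { rewrite (grid_G phi Hg p q Hp Hq Hpq). f_equal. ring. }
  assert (E2 : phi q s = G c a0 b (p + (q - p)) (p + zeta * (q - p))).
  { rewrite (grid_G phi Hg q s Hq Hs Hqs). rewrite <- Hsh. f_equal. ring. }
  assert (E3 : phi s p = G c a0 b (p + zeta * (q - p)) p).
  { rewrite (grid_G phi Hg s p Hs Hp Hsp). rewrite <- Hsh. reflexivity. }
  rewrite E1, E2, E3 in *.
  apply tri_X16; assumption.
Qed.
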